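(* Let $A,B\in\mathbb{R}^{m\times n}$ with $m<n$ and $b\in\mathbb{R}^m$, and let $1\le p\le\infty$. Let $A = M_A - N_A$ with $\operatorname{rank}(M_A) =m$. If $M_A^\dagger b\geq0$, $M_A^\dagger (N_A + B) \geq 0$ and $\|M_A^\dagger (N_A + B)\|_p <1$, then the equation $Ax-B|x|=b$ has at least one nonnegative solution.
   Context: $M^\dagger$ is the Moore–Penrose inverse; $|x|$ is the entrywise absolute value; vector/matrix inequalities are entrywise; $\|\cdot\|_p$ on matrices is the operator norm induced by the vector $p$-norm. *)

(* Defs.v *)
From HB Require Import structures.
From mathcomp Require Import all_boot all_order all_algebra.
From mathcomp Require Import all_classical all_reals all_analysis.
Set Implicit Arguments. Unset Strict Implicit. Unset Printing Implicit Defensive.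
Import Order.TTheory GRing.Theory Num.Theory.
Local Open Scope ring_scope.

Definition moore_penrose (R : realType) (m n : nat)
  (M : 'M[R]_(m, n)) (X : 'M[R]_(n, m)) : Prop :=
  [/\ M *m X *m M = M, X *m M *m X = X,
      (M *m X)^T = M *m X & (X *m M)^T = X *m M].

Definition mx_abs (R : realType) (m n : nat) (A : 'M[R]_(m, n)) : 'M[R]_(m, n) :=
  map_mx (fun x => `|x|) A.

Definition mx_nonneg (R : realType) (m n : nat) (A : 'M[R]_(m, n)) : Prop :=
  forall i j, 0 <= A i j.

Definition vnorm (R : realType) (n : nat) (p : \bar R) (x : 'cV[R]_n) : R :=
  match p with
  | EFin r => (\sum_(i < n) `|x i 0| `^ r) `^ r^-1
  | +oo%E => \big[Num.max/0]_(i < n) `|x i 0|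
  | -oo%E => 0
  end.

Definition opnorm (R : realType) (k n : nat) (p : \bar R) (M : 'M[R]_(k, n)) : R :=
  sup [set vnorm p (M *m x) | x in [set x : 'cV[R]_n | vnorm p x <= 1]].

(* Main.v *)
Require Import Defs.
From HB Require Import structures.
From mathcomp Require Import all_boot all_order all_algebra.
From mathcomp Require Import all_classical all_reals all_analysis.
Import Order.TTheory GRing.Theory Num.Theory.
Local Open Scope ring_scope.

Section Aux.
Variable R : realType.

Definition normlike {n : nat} (N : 'cV[R]_n -> R) :=
  [/\ forall x, N x = N (mx_abs x),
      forall u v : 'cV[R]_n, (forall i, 0 <= u i 0 <= v i 0) -> N u <= N v,
      forall t (u : 'cV[R]_n), 0 <= t -> N (t *: u) = t * N u &
      forall u : 'cV[R]_n, (forall i, 0 <= u i 0) -> u != 0 -> 0 < N u].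

Lemma exists_nz (n : nat) (u : 'cV[R]_n) : u != 0 -> exists i, u i 0 != 0.
Proof.
move=> Hu; case: (pselect (exists i, u i 0 != 0)) => // H.
exfalso; move/negP: Hu; apply; apply/eqP/matrixP => i j.
rewrite ord1 mxE; apply/eqP/negPn/negP => h; apply: H; by exists i.
Qed.

Lemma key (n : nat) (N : 'cV[R]_n -> R) (C : 'M[R]_n) :
  normlike N -> (forall i j, 0 <= C i j) ->
  sup [set N (C *m x) | x in [set x : 'cV[R]_n | N x <= 1]] < 1 ->
  forall y : 'cV[R]_n, (forall i, 0 <= y i 0) ->
  (forall i, y i 0 <= (C *m y) i 0) -> y = 0.
Proof.
move=> [Nabs Nmono Nhom Npos] C0 Hc y y0 yC.
set S := (X in sup X) in Hc.
have N0 : N 0 = 0 by rewrite -(scale0r (0 : 'cV[R]_n)) Nhom // mul0r.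
have Nge0 : forall u, 0 <= N u.
  move=> u; rewrite Nabs -N0; apply: (Nmono) => i; rewrite !mxE lexx /=.
  exact: normr_ge0.
have hs : has_sup S.
  split; first by exists (N (C *m 0)), 0 => //=; rewrite N0.
  pose e (i : 'I_n) : 'cV[R]_n := delta_mx i 0.
  have Ne : forall i, 0 < N (e i).
    move=> i; apply: (Npos) => [k|]; first by rewrite mxE; case: (_ && _).
    apply/eqP => /matrixP /(_ i 0); rewrite !mxE !eqxx /= => /eqP.
    by rewrite oner_eq0.
  pose v : 'cV[R]_n := \col_j (N (e j))^-1.
  exists (N (C *m v)) => _ [x /= Nx <-].
  rewrite Nabs; apply: (Nmono) => i; rewrite mxE normr_ge0 /= !mxE.
  apply: le_trans (ler_norm_sum _ _ _) _; apply: ler_sum => j _.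
  rewrite normrM ger0_norm // ler_wpM2l // mxE.
  have : `|x j 0| * N (e j) <= 1.
    rewrite -Nhom //; apply: le_trans Nx; rewrite (Nabs x); apply: (Nmono) => k.
    rewrite !mxE; case: eqP => [->|_]; rewrite ?mulr1 ?mulr0 ?lexx ?normr_ge0 //.
  by rewrite -ler_pdivlMr // mul1r.
apply/eqP; apply/negPn/negP => ynz.
have Ny := Npos _ y0 ynz.
pose z := (N y)^-1 *: y.
have Nz : N z = 1 by rewrite /z Nhom ?invr_ge0 ?(ltW Ny) // mulVf // gt_eqF.
have : N (C *m z) <= sup S.
  apply: sup_upper_bound => //; exists z => //=; by rewrite Nz.
have : N z <= N (C *m z).
  have Ny' : 0 <= (N y)^-1 by rewrite invr_ge0 ltW.
  apply: (Nmono) => i; rewrite /z -scalemxAr !mxE mulr_ge0 //=.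
  by rewrite ler_wpM2l //; move: (yC i); rewrite mxE.
rewrite Nz => h1 h2; have := le_lt_trans (le_trans h1 h2) Hc.
by rewrite ltxx.
Qed.


Lemma normlike_inf (n : nat) : normlike (@vnorm R n +oo%E).
Proof.
split => /=.
- by move=> x; apply: eq_bigr => i _; rewrite mxE normr_id.
- move=> u v uv; apply: le_bigmax2 => i _.
  by case/andP: (uv i) => h1 h2; rewrite !ger0_norm // (le_trans h1 h2).
- move=> t u t0; elim/big_rec2: _ => [|i a b _ ->]; first by rewrite mulr0.
  by rewrite mxE normrM (ger0_norm t0) maxr_pMr.
- move=> u u0 unz; have [i ui] := @exists_nz _ u unz.
  apply: lt_le_trans (le_bigmax _ _ i); by rewrite normr_gt0.
Qed.

Lemma normlike_fin (n : nat) (r : R) : 1 <= r -> normlike (@vnorm R n r%:E).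
Proof.
move=> r1; have r0 : 0 < r by apply: lt_le_trans r1.
have ri0 : 0 <= r^-1 by rewrite invr_ge0 (ltW r0).
have sge0 : forall u : 'cV[R]_n, 0 <= \sum_(i < n) `|u i 0| `^ r.
  by move=> u; apply: sumr_ge0 => i _; apply: powR_ge0.
split => /=.
- by move=> x; congr (_ `^ _); apply: eq_bigr => i _; rewrite mxE normr_id.
- move=> u v uv; apply: ge0_ler_powR; rewrite ?nnegrE ?sge0 //.
  apply: ler_sum => i _; case/andP: (uv i) => h1 h2.
  apply: ge0_ler_powR; rewrite ?nnegrE ?normr_ge0 ?(ltW r0) //.
  by rewrite !ger0_norm // (le_trans h1 h2).
- move=> t u t0.
  rewrite (eq_bigr (fun i => t `^ r * `|u i 0| `^ r)); last first.
    by move=> i _; rewrite mxE normrM (ger0_norm t0) powRM.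
  rewrite -big_distrr /= powRM ?powR_ge0 ?sge0 // -powRrM mulfV ?gt_eqF //.
  by rewrite powRr1.
- move=> u u0 unz; have [i ui] := @exists_nz _ u unz.
  apply: powR_gt0; rewrite (bigD1 i) //=.
  have h1 : 0 < `|u i 0| `^ r by apply: powR_gt0; rewrite normr_gt0.
  apply: lt_le_trans h1 _; rewrite lerDl.
  by apply: sumr_ge0 => j _; apply: powR_ge0.
Qed.

End Aux.

Theorem corollary3p6 (R : realType) (m n : nat)
  (A B : 'M[R]_(m, n)) (b : 'cV[R]_m) (p : \bar R)
  (MA NA : 'M[R]_(m, n)) (MAdag : 'M[R]_(n, m)) :
  (m < n)%N -> (1 <= p)%E ->
  A = MA - NA -> \rank MA = m ->
  moore_penrose MA MAdag ->
  mx_nonneg (MAdag *m b) ->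
  mx_nonneg (MAdag *m (NA + B)) ->
  opnorm p (MAdag *m (NA + B)) < 1 ->
  exists x : 'cV[R]_n, mx_nonneg x /\ A *m x - B *m mx_abs x = b.
Proof.
move=> ltmn p1 -> rkMA [P1 _ _ _] d0 C0 Hc.
set C := MAdag *m (NA + B) in C0 Hc *.
set d := MAdag *m b in d0 *.
have NL : @normlike R n (@vnorm R n p).
  case: p p1 {Hc} => [r| |] //= p1.
  - by apply: normlike_fin; rewrite -lee_fin.
  - exact: normlike_inf.
have K := @key R n _ C NL C0 Hc.
have MAI : MA *m MAdag = 1%:M.
  apply: (@row_free_inj _ _ _ _ MA); first by rewrite /row_free rkMA.
  by rewrite /= mul1mx.
have Cabs : forall y : 'cV[R]_n, forall i,
    `|(C *m y) i 0| <= (C *m mx_abs y) i 0.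
  move=> y i; rewrite [X in `|X|]mxE [X in _ <= X]mxE; apply: le_trans (ler_norm_sum _ _ _) _.
  by apply: ler_sum => j _; rewrite normrM (ger0_norm (C0 i j)) [mx_abs y j 0]mxE.
have Iu : (1%:M - C) \in unitmx.
  rewrite unitmxE unitfE -det_tr; apply/negP => /det0P [v vnz vC].
  have Cy : C *m v^T = v^T.
    have : (1%:M - C) *m v^T = 0 by rewrite -[LHS]trmxK trmx_mul trmxK vC trmx0.
    by rewrite mulmxBl mul1mx => /eqP; rewrite subr_eq0 => /eqP h; exact: esym.
  have ay : mx_abs v^T = 0.
    apply: K; first by move=> i; rewrite mxE normr_ge0.
    move=> i.
    by rewrite [X in X <= _]mxE -{1}Cy Cabs.
  move/negP: vnz; apply; apply/eqP/matrixP => i j.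
  move/matrixP: ay => /(_ j i); rewrite !mxE => /eqP.
  by rewrite normr_eq0 => /eqP ->.
pose x := invmx (1%:M - C) *m d.
have Hx : (1%:M - C) *m x = d by rewrite mulmxA mulmxV // mul1mx.
have xe : x = d + C *m x.
  by move: Hx; rewrite mulmxBl mul1mx => <-; rewrite subrK.
have xnn : forall i, 0 <= x i 0.
  pose w : 'cV[R]_n := \col_i Num.max (- x i 0) 0.
  have w0 : w = 0.
    apply: K; first by move=> i; rewrite mxE le_max lexx orbT.
    move=> i.
    rewrite mxE ge_max; apply/andP; split; last first.
      rewrite mxE; apply: sumr_ge0 => j _; apply: mulr_ge0 => //.
      by rewrite mxE le_max lexx orbT.
    rewrite {1}xe [(d + _) i 0]mxE opprD.
    apply: le_trans (_ : - (C *m x) i 0 <= _).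
      by rewrite lerBlDr addNr oppr_le0 (d0 i 0).
    rewrite [X in - X <= _]mxE [X in _ <= X]mxE -sumrN.
    apply: ler_sum => j _; rewrite -mulrN ler_wpM2l //.
    by rewrite [w j 0]mxE le_max lexx.
  move=> i; move/matrixP: w0 => /(_ i 0); rewrite [w i 0]mxE [X in _ = X]mxE => h.
  have : - x i 0 <= Num.max (- x i 0) 0 by rewrite le_max lexx.
  by rewrite h oppr_le0.
exists x; split; first by move=> i j; rewrite ord1.
have -> : mx_abs x = x.
  by apply/matrixP => i j; rewrite ord1 mxE ger0_norm.
have MAx : MA *m x = b + (NA + B) *m x.
  by rewrite {1}xe mulmxDr !mulmxA MAI !mul1mx.
rewrite mulmxBl MAx mulmxDl.
by rewrite -addrA -opprD addrK.
Qed.
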